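(* Let $c_0(t)$ be an analytic function, not identically zero, and define analytic functions $c_n(t)$, $n\ge 1$, by $$c_1=\dot c_0,\qquad c_{n+1}=\dot c_n+\sum_{s=0}^{n-1}c_s c_{n-1-s}\quad(n\ge 1).$$ Let $U(t)=-c_0(t)$ and define $\sigma_m(t)$, $m\ge 1$, by $\sigma_1=-U$, $\sigma_2=-\dot U$, and $$\sigma_{m+1}=\dot\sigma_m+\sum_{k=1}^{m-1}\sigma_k\sigma_{m-k}\quad(m\ge 1).$$ Then $\sigma_m(t)=c_{m-1}(t)$ for all $m\ge 1$.
   Context: The recursion for $c_n$ is the moment recursion of the unrestricted Toda chain in the case $u_0(t)=c_0(t)$ (equivalently, boundary condition $b_{-1}\equiv 0$). The $\sigma_m$ are the conserved densities of the Korteweg–de Vries equation associated with the Schrödinger potential $U$ (with the variable $t$ playing the role of the spatial variable $x$). A dot denotes differentiation in $t$. *)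

(* Defs.v *)
From Stdlib Require Import Reals List.
From Coquelicot Require Import Coquelicot.
Open Scope R_scope.

Definition analytic (f : R -> R) : Prop :=
  forall x : R, exists r : R, 0 < r /\ exists a : nat -> R,
    forall y : R, Rabs (y - x) < r -> is_pseries a (y - x) (f y).

Definition sumR (l : list nat) (F : nat -> R) : R :=
  fold_right Rplus 0 (map F l).

(* Main.v *)
Require Import Defs.
From Stdlib Require Import Reals List Lia.
From Coquelicot Require Import Coquelicot.
Open Scope R_scope.

Lemma sumR_ext (l : list nat) (F G : nat -> R) :
  (forall x, In x l -> F x = G x) -> sumR l F = sumR l G.
Proof.
  unfold sumR; induction l as [|a l IH]; simpl; intros H; auto.
  rewrite H by auto. rewrite IH by auto. reflexivity.
Qed.

Theorem mainTheorem2 (c0 : R -> R) (c sigma : nat -> R -> R) :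
  analytic c0 ->
  (exists t, c0 t <> 0) ->
  (forall t, c 0%nat t = c0 t) ->
  (forall t, c 1%nat t = Derive (c 0%nat) t) ->
  (forall (n : nat) t, (1 <= n)%nat ->
     c (S n) t = Derive (c n) t
                 + sumR (seq 0 n) (fun s => c s t * c (n - 1 - s)%nat t)) ->
  let U := fun t => - c0 t in
  (forall t, sigma 1%nat t = - U t) ->
  (forall t, sigma 2%nat t = - Derive U t) ->
  (forall (m : nat) t, (1 <= m)%nat ->
     sigma (S m) t = Derive (sigma m) t
                     + sumR (seq 1 (m - 1)) (fun k => sigma k t * sigma (m - k)%nat t)) ->
  forall (m : nat) t, (1 <= m)%nat -> sigma m t = c (m - 1)%nat t.
Proof.
  intros _ _ Hc0 Hc1 HcS U Hs1 Hs2 HsS.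
  assert (H : forall N m, (1 <= m <= N)%nat -> forall t, sigma m t = c (m - 1)%nat t).
  { induction N as [|N IH]; intros m Hm t; [lia|].
    destruct (Nat.eq_dec m 1) as [->|H1].
    { rewrite Hs1, Hc0. unfold U. ring. }
    destruct (Nat.eq_dec m 2) as [->|H2].
    { rewrite Hs2, Hc1. unfold U. rewrite Derive_opp. rewrite Ropp_involutive.
      apply Derive_ext. intro; rewrite Hc0; auto. }
    destruct m as [|m]; [lia|].
    rewrite HsS by lia.
    replace (S m - 1)%nat with (S (m - 1)) by lia.
    rewrite HcS by lia.
    f_equal.
    - apply Derive_ext. intro s. apply IH. lia.
    - replace (m - 1)%nat with (S (m - 2)) at 1 by lia.
      rewrite <- seq_shift. unfold sumR. rewrite map_map.
      replace (m - 1)%nat with (S (m - 2)) at 1 by lia.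
      change (sumR (seq 0 (S (m-2))) (fun x => sigma (S x) t * sigma (m - S x)%nat t) =
              sumR (seq 0 (S (m-2))) (fun s => c s t * c (m - 1 - 1 - s)%nat t)).
      apply sumR_ext. intros x Hx. apply in_seq in Hx.
      rewrite (IH (S x)) by lia. rewrite (IH (m - S x)%nat) by lia.
      f_equal; f_equal; lia. }
  intros m t Hm. apply (H m); lia.
Qed.
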